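(* For every pair of positive integers $g,k$, every graph $G_{g,k}$ obtained by the construction described in the context satisfies $\chi(G_{g,k})\ge k$.
   Context: Hypergraph notions. A closed walk of length $\ell$ in a hypergraph $H$ is a sequence $v_0F_0v_1F_1\ldots F_{\ell-1}v_0$ with $v_i,v_{i+1}\in F_i$ for all $0\le i<\ell$ (indices mod $\ell$), $F_i\ne F_{i+1}$ for all $i$ (indices mod $\ell$), and $v_1,\ldots,v_{\ell-1}$ pairwise distinct. An $r$-uniform hypergraph $H$ is tranquil, witnessed by labellings $\lambda=\{\lambda_F\}_{F\in E(H)}$ with $\lambda_F:F\to\{1,\dots,r\}$, if for every closed walk $W=v_0F_0\ldots F_{\ell-1}v_0$ the multigraph on $\{1,\dots,r\}$ with edge multiset $\{\lambda_{F_i}(v_i)\lambda_{F_i}(v_{i+1}):0\le i<\ell\}$ is bridgeless. The chromatic number of a hypergraph is the least number of colours in a vertex colouring with no monochromatic hyperedge; its girth is the length of a shortest Berge cycle (distinct hyperedges $F_1,\dots,F_\ell$ and distinct vertices $x_1,\dots,x_\ell$ with $x_i\in F_i\cap F_{i+1}$, indices mod $\ell$). Construction. Fix a positive integer $g$. $G_{g,1}$ is a single vertex. For $k\ge 2$, given a graph $G_{g,k-1}$ obtained by the construction, with vertex set identified with $\{1,\dots,r\}$, take a finite tranquil $r$-uniform hypergraph $H$ with chromatic number at least $k$ and girth at least $\lceil g/3\rceil$, together with tranquility-witnessing labellings $\lambda_F$, each $\lambda_F:F\to\{1,\dots,r\}$ a bijection. The graph $G_{g,k}$ consists of an independent set $T$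 with a bijection $\nu:T\to V(H)$, together with, for each hyperedge $F\in E(H)$, a disjoint copy $G_F$ of $G_{g,k-1}$; for each $F\in E(H)$ one adds the perfect matching between $G_F$ and $\nu^{-1}(F)$ joining the vertex of $G_F$ corresponding to $i\in\{1,\dots,r\}$ to the vertex $t\in\nu^{-1}(F)$ with $\lambda_F(\nu(t))=i$. No other edges are present. $\chi$ denotes the (vertex) chromatic number of a graph. *)

(* Defs.v *)
From mathcomp Require Import all_boot.
Set Implicit Arguments. Unset Strict Implicit. Unset Printing Implicit Defensive.

(* World: plain MathComp (boot). Indices {1..r} are rendered as 'I_r. *)

Definition graph_colorable (V : finType) (adj : rel V) (c : nat) : Prop :=
  exists f : V -> 'I_c, forall x y, adj x y -> f x != f y.

Definition graph_chi_ge (V : finType) (adj : rel V) (k : nat) : Prop :=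
  forall c, c < k -> ~ graph_colorable adj c.

Definition uniform (W : finType) (E : {set {set W}}) (r : nat) : Prop :=
  forall F, F \in E -> #|F| = r.

Definition monochromatic (W : finType) (c : nat) (f : W -> 'I_c) (F : {set W}) : bool :=
  [forall x in F, forall y in F, f x == f y].

Definition hyp_colorable (W : finType) (E : {set {set W}}) (c : nat) : Prop :=
  exists f : W -> 'I_c, forall F, F \in E -> ~~ monochromatic f F.

Definition hyp_chi_ge (W : finType) (E : {set {set W}}) (k : nat) : Prop :=
  forall c, c < k -> ~ hyp_colorable E c.

Definition berge_cycle (W : finType) (E : {set {set W}}) (l : nat) : Prop :=
  exists (Fs : nat -> {set W}) (xs : nat -> W),
    [/\ forall i, i < l -> Fs i \in E,
        forall i j, i < l -> j < l -> Fs i = Fs j -> i = j,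
        forall i j, i < l -> j < l -> xs i = xs j -> i = j &
        forall i, i < l -> xs i \in Fs i :&: Fs ((i + 1) %% l)].

Definition girth_ge (W : finType) (E : {set {set W}}) (m : nat) : Prop :=
  forall l, 2 <= l -> l < m -> ~ berge_cycle E l.

Definition closed_walk (W : finType) (E : {set {set W}}) (l : nat)
    (v : nat -> W) (F : nat -> {set W}) : Prop :=
  [/\ forall i, i < l -> F i \in E,
      forall i, i < l -> (v i \in F i) && (v ((i + 1) %% l) \in F i),
      forall i, i < l -> F i != F ((i + 1) %% l) &
      forall i j, 0 < i -> i < j -> j < l -> v i != v j].

(* the multigraph on 'I_r with edges a_i b_i (i < l) is bridgeless:
   for every edge i, its endpoints stay connected after deleting edge i *)
Definition bridgeless (r l : nat) (a b : nat -> 'I_r) : Prop :=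
  forall i, i < l ->
    connect (fun x y : 'I_r => [exists j : 'I_l, (val j != i) &&
               (((a j == x) && (b j == y)) || ((a j == y) && (b j == x)))])
            (a i) (b i).

(* tranquility witnessed by the labellings lam F : W -> 'I_r (relevant on F) *)
Definition tranquil (W : finType) (E : {set {set W}}) (r : nat)
    (lam : {set W} -> W -> 'I_r) : Prop :=
  forall l v F, closed_walk E l v F ->
    bridgeless l (fun i => lam (F i) (v i)) (fun i => lam (F i) (v ((i + 1) %% l))).

Definition labelling_bij (W : finType) (E : {set {set W}}) (r : nat)
    (lam : {set W} -> W -> 'I_r) : Prop :=
  forall F, F \in E ->
    {in F &, injective (lam F)} /\ (forall i : 'I_r, exists2 x, x \in F & lam F x = i).

Definition edge_of (W : finType) (E : {set {set W}}) := {F : {set W} | F \in E}.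

Definition step_adj (W T V' : finType) (E : {set {set W}}) (r : nat)
    (nu : T -> W) (lam : {set W} -> W -> 'I_r) (sigma : V' -> 'I_r) (adj' : rel V')
    (x y : (T + (edge_of E * V'))%type) : bool :=
  match x, y with
  | inl _, inl _ => false
  | inl t, inr (F, u) => (nu t \in val F) && (lam (val F) (nu t) == sigma u)
  | inr (F, u), inl t => (nu t \in val F) && (lam (val F) (nu t) == sigma u)
  | inr (F, u), inr (F', u') => (F == F') && adj' u u'
  end.

Inductive constructible (g : nat) : nat -> forall V : finType, rel V -> Prop :=
  | constr_base (V : finType) (adj : rel V) :
      #|V| = 1 -> (forall x y, adj x y = false) -> constructible g 1 adj
  | constr_step (k : nat) (V' : finType) (adj' : rel V') (r : nat)
      (sigma : V' -> 'I_r) (W : finType) (E : {set {set W}})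
      (lam : {set W} -> W -> 'I_r) (T : finType) (nu : T -> W) :
      2 <= k.+1 ->
      constructible g k adj' ->
      bijective sigma ->
      uniform E r ->
      labelling_bij E lam ->
      tranquil E lam ->
      hyp_chi_ge E k.+1 ->
      girth_ge E ((g + 2) %/ 3) ->
      bijective nu ->
      constructible g k.+1 (@step_adj W T V' E r nu lam sigma adj').

(* Main.v *)
Require Import Defs.
From mathcomp Require Import all_boot.

Theorem lemma4p3 (g k : nat) : 0 < g -> 0 < k ->
  forall (V : finType) (adj : rel V), constructible g k adj -> graph_chi_ge adj k.
Proof.
move=> _ _ V adj C.
elim: C => {k V adj}.
- move=> V adj HV _ c Hc [f _].
  have c0 : c = 0 by case: c Hc f => [|[]].
  subst c.
  have: 0 < #|V| by rewrite HV.
  by case/card_gt0P => x _; case: (f x).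
- move=> k V' adj' r sigma W E lam T nu Hk _ IH _ _ Hlab _ Hchi _ [nuinv nuK nuK'].
  move=> c Hc [f Hf].
  have IHk := IH.
  pose gw := fun w : W => f (inl (nuinv w)).
  have [F HF mono] : exists2 F, F \in E & monochromatic gw F.
    case: (boolP [exists F in E, monochromatic gw F]).
      by case/exists_inP => F HF HM; exists F.
    move=> Hn; exfalso; apply: (Hchi c Hc); exists gw => F HF.
    by apply/negP => HM; move/negP: Hn; apply; apply/exists_inP; exists F.
  case: (pickP (fun _ : V' => true)) => [v' _ | none]; last first.
    exfalso; apply: (IHk 0 Hk).
    by exists (fun u => False_rect _ (eq_ind true (fun b : bool => if b then True else False) I false (none u))) => u; have := none u.
  have [Hinj Hsurj] := Hlab F HF.
  have [x0 Hx0 Hlx0] := Hsurj (sigma v').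
  pose a := gw x0.
  pose Fe := (exist _ F HF : edge_of E).
  pose h := fun u : V' => f (inr (Fe, u)).
  have Hne : forall u, a != h u.
    move=> u; have [xu Hxu Hlxu] := Hsurj (sigma u).
    have Had : step_adj nu lam sigma adj' (inl (nuinv xu)) (inr (Fe, u)).
      by rewrite /= nuK' Hxu Hlxu eqxx.
    have := Hf _ _ Had.
    have -> : f (inl (nuinv xu)) = a.
      rewrite /a; move/forall_inP: mono => /(_ xu Hxu) /forall_inP /(_ x0 Hx0) /eqP.
      by rewrite /gw.
    by [].
  move: (a) Hne => a' Hne.
  apply: (IHk c.-1).
    have Hc0 : 0 < c := leq_ltn_trans (leq0n _) (ltn_ord a').
    by rewrite -ltnS prednK.
  exists (fun u => s2val (unlift_some (Hne u))) => u u' Hadj.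
  have E1 := s2valP (unlift_some (Hne u)).
  have E2 := s2valP (unlift_some (Hne u')).
  apply/negP => /eqP Ek; rewrite Ek in E1.
  have Had : step_adj nu lam sigma adj' (inr (Fe, u)) (inr (Fe, u')).
    by rewrite /= eqxx Hadj.
  have := Hf _ _ Had; rewrite -/(h u) -/(h u').
  have -> : h u = h u' by rewrite [LHS]E1 [RHS]E2.
  by rewrite eqxx.
Qed.
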